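(* For $n\ge4$ and $0\le k<n$, $$|\mathbf{I}_{n,k}(012)|=|\mathbf{I}_{n-1}(012)|-\sum_{l=1}^{k-1}\sum_{j=0}^{l-1}\sum_{i\ge j}|\mathbf{I}_{n-3,i}(012)|,$$ with initial conditions $|\mathbf{I}_{1,0}(012)|=|\mathbf{I}_{2,0}(012)|=|\mathbf{I}_{2,1}(012)|=|\mathbf{I}_{3,2}(012)|=1$ and $|\mathbf{I}_{3,0}(012)|=|\mathbf{I}_{3,1}(012)|=2$. Equivalently, for $n\ge4$, $$|\mathbf{I}_{n,k}(012)|=|\mathbf{I}_{n-1}(012)|-\sum_{i=0}^{k-3}(i+1)\Big(k-1-\frac i2\Big)|\mathbf{I}_{n-3,i}(012)|-\frac{k(k-1)}{2}\sum_{i=k-2}^{n-4}|\mathbf{I}_{n-3,i}(012)|.$$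
   Context: An inversion sequence of length $n$ is an integer sequence $e=e_1\dots e_n$ with $0\le e_i<i$ for all $i$; $\mathbf{I}_n$ denotes the set of these. $\mathbf{I}_n(012)$ is the set of $e\in\mathbf{I}_n$ with no $i$ such that $e_i<e_{i+1}<e_{i+2}$ (avoiding the consecutive pattern $012$). $\mathbf{I}_{n,k}(012)=\{e\in\mathbf{I}_n(012):e_n=k\}$, empty for $k\ge n$. Empty sums are $0$. *)

(* Defs.v *)
From HB Require Import structures.
From mathcomp Require Import all_boot all_order all_algebra.
Set Implicit Arguments. Unset Strict Implicit. Unset Printing Implicit Defensive.

(* A sequence s = e_1 ... e_n (stored 0-indexed: s`_i = e_{i+1}) is an
   inversion sequence iff 0 <= e_i < i, i.e. nth 0 s i <= i (0-indexed). *)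
Definition is_inv_seq (s : seq nat) : bool :=
  all (fun i => nth 0 s i <= i) (iota 0 (size s)).

Definition avoids012 (s : seq nat) : bool :=
  ~~ has (fun i => (nth 0 s i < nth 0 s i.+1) && (nth 0 s i.+1 < nth 0 s i.+2))
         (iota 0 (size s - 2)).

(* I_n(012): every inversion sequence of length n has entries < n, so it is
   represented by an n-tuple of elements of 'I_n (via map val). *)
Definition I012 (n : nat) : {set n.-tuple 'I_n} :=
  [set t : n.-tuple 'I_n | is_inv_seq (map val t) && avoids012 (map val t)].

Definition I012k (n k : nat) : {set n.-tuple 'I_n} :=
  [set t in I012 n | (0 < n) && (nth 0 (map val t) n.-1 == k)].

(* Main.v *)
Require Import Defs.
From HB Require Import structures.
From mathcomp Require Import all_boot all_order all_algebra.
From mathcomp Require Import zify ring lra.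
Import Order.TTheory GRing.Theory Num.Theory.
Set Implicit Arguments. Unset Strict Implicit.

Definition ok (n : nat) (s : seq nat) (x : nat) : bool :=
  ~~ ((nth 0 s n.-2 < nth 0 s n.-1) && (nth 0 s n.-1 < x)).

Fixpoint V (n : nat) : seq (seq nat) :=
  match n with
  | 0 => [:: [::]]
  | n'.+1 => [seq rcons s x | s <- V n', x <- [seq x <- iota 0 n'.+1 | ok n' s x]]
  end.
Arguments V : simpl never.

Lemma inv_rcons s x : is_inv_seq (rcons s x) = is_inv_seq s && (x <= size s).
Proof.
rewrite /is_inv_seq size_rcons -addn1 iotaD all_cat /= add0n nth_rcons ltnn eqxx andbT.
congr andb; apply: eq_in_all => i; rewrite mem_iota add0n => /andP[_ lt].
by rewrite nth_rcons lt.
Qed.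

Lemma avoid_rcons s x : avoids012 (rcons s x) = avoids012 s && ok (size s) s x.
Proof.
rewrite /avoids012 /ok size_rcons.
case: (ltnP (size s) 2) => hs.
  have -> : (size s).+1 - 2 = 0 by lia.
  have -> : size s - 2 = 0 by lia.
  by case: (size s) hs => [|[|]] //= _; rewrite ltnn.
have -> : (size s).+1 - 2 = (size s - 2) + 1 by lia.
rewrite iotaD has_cat /= add0n orbF negb_or.
congr andb.
  congr negb; apply: eq_in_has => i; rewrite mem_iota add0n => /andP[_ lt].
  rewrite !nth_rcons; have -> : i < size s by lia.
  have -> : i.+1 < size s by lia. by have -> : i.+2 < size s by lia.
rewrite !nth_rcons.
have -> : size s - 2 < size s by lia.
have -> : (size s - 2).+1 < size s by lia.
have -> : (size s - 2).+2 < size s = false by lia.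
have -> : (size s - 2).+2 == size s by lia.
have -> : (size s - 2) = (size s).-2 by lia.
by have -> : (size s).-2.+1 = (size s).-1 by lia.
Qed.

Lemma V_char n s : (s \in V n) = [&& size s == n, is_inv_seq s & avoids012 s].
Proof.
elim: n s => [|n IH] s.
  by case: s.
case/lastP: s => [|s x].
  rewrite /=; apply/negbTE/allpairsPdep => -[s' [y [_ _]]].
  by case: s'.
rewrite size_rcons eqSS inv_rcons avoid_rcons.
apply/allpairsPdep/idP.
  move=> [s' [y [hs' hy /rcons_inj [-> ->]]]].
  move: hy; rewrite mem_filter mem_iota /= add0n => /andP[hok hlt].
  move: hs'; rewrite IH => /and3P[/eqP sz -> ->].
  by rewrite sz eqxx -ltnS hlt hok.
move=> /and3P[/eqP sz /andP[hi hx] /andP[ha hok]].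
exists s, x; split => //.
  by rewrite IH sz eqxx hi ha.
by rewrite mem_filter mem_iota add0n -sz ltnS hx hok.
Qed.

Lemma V_uniq n : uniq (V n).
Proof.
elim: n => [|n IH] //.
apply: allpairs_uniq_dep => //.
  by move=> s _; apply: filter_uniq; apply: iota_uniq.
by move=> [a b] [c d] _ _ /= /rcons_inj [-> ->].
Qed.

Lemma mk_tup n s : size s = n -> is_inv_seq s -> exists t : n.-tuple 'I_n, map val t = s.
Proof.
case: n => [|n] sz hi.
  move/eqP: sz; rewrite size_eq0 => /eqP ->; by exists [tuple].
have szs : size (map (@inord n) s) == n.+1 by rewrite size_map sz.
exists (Tuple szs) => /=.
rewrite -map_comp map_id_in // => x /(nthP 0) [i hi' <-] /=.
apply: inordK; move/allP: hi => /(_ i); rewrite mem_iota add0n hi' => /(_ isT).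
by rewrite -sz => h; apply: leq_ltn_trans h hi'.
Qed.

Lemma bridge n (R : pred (seq nat)) :
  #|[set t : n.-tuple 'I_n | (is_inv_seq (map val t) && avoids012 (map val t)) && R (map val t)]|
  = count R (V n).
Proof.
rewrite cardE -(size_map (fun t : n.-tuple 'I_n => map val t)) -size_filter.
apply: perm_size; apply: uniq_perm.
- rewrite map_inj_uniq ?enum_uniq // => t1 t2 /(inj_map val_inj) h; exact: val_inj.
- by apply: filter_uniq; apply: V_uniq.
move=> s; rewrite mem_filter V_char; apply/mapP/idP.
  case=> t; rewrite mem_enum inE => /andP[/andP[hi ha] hr] ->.
  by rewrite hr hi ha size_map size_tuple eqxx.
move=> /andP[hr /and3P[/eqP sz hi ha]].
have [t ht] := mk_tup sz hi.
by exists t => //; rewrite mem_enum inE ht hi ha hr.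
Qed.

Lemma V_size n s : s \in V n -> size s = n.
Proof. by rewrite V_char => /and3P[/eqP]. Qed.

Lemma V_nth n s i : s \in V n -> i < n -> nth 0 s i <= i.
Proof.
rewrite V_char => /and3P[/eqP sz hi _] lt.
by move/allP: hi => /(_ i); rewrite mem_iota add0n sz lt => /(_ isT).
Qed.

Lemma count_sum (T : Type) (a : pred T) l : count a l = \sum_(x <- l) a x.
Proof. by elim: l => [|x l IH]; rewrite ?big_nil ?big_cons //= IH. Qed.

Lemma sumV n (F : seq nat -> nat) :
  \sum_(s <- V n.+1) F s = \sum_(s <- V n) \sum_(0 <= x < n.+1 | ok n s x) F (rcons s x).
Proof.
have -> : V n.+1 = [seq rcons s x | s <- V n, x <- [seq x <- iota 0 n.+1 | ok n s x]] by [].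
rewrite big_allpairs_dep; apply: eq_bigr => s _.
by rewrite big_filter /index_iota subn0.
Qed.

Definition A m i := count (fun s => (0 < m) && (nth 0 s m.-1 == i)) (V m).
Definition bad m k (s : seq nat) : bool := (nth 0 s m < nth 0 s m.+1) && (nth 0 s m.+1 < k).
Definition c k t := \sum_(0 <= y < t.+1) (k.-1 - y).

Lemma HS1 m k : k < m.+3 -> A m.+3 k + \sum_(s <- V m.+2) bad m k s = size (V m.+2).
Proof.
move=> hk.
rewrite /A count_sum sumV -sum1_size -big_split /=.
apply: eq_big_seq => s hs.
have -> : \sum_(0 <= x < m.+3 | ok m.+2 s x) (nth 0 (rcons s x) m.+2 == k)
          = ok m.+2 s k.
  rewrite big_mkcond /index_iota subn0 (bigD1_seq k) ?mem_iota ?iota_uniq //=.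
  rewrite nth_rcons (V_size hs) ltnn eqxx eqxx big1 ?addn0.
    by case: (ok _ _ _).
  move=> x hx; rewrite nth_rcons (V_size hs) ltnn eqxx.
  by rewrite (negbTE hx); case: (ok _ _ _).
by rewrite /ok /bad /=; case: (_ && _).
Qed.

Lemma cnt N a k : \sum_(0 <= x < N) ((a < x) && (x < k)) = minn N k - a.+1.
Proof.
elim: N => [|N IH]; first by rewrite big_geq // min0n.
rewrite big_nat_recr //= IH.
case: (ltnP a N) => h1; case: (ltnP N k) => h2 /=; lia.
Qed.

Lemma HS2 m k : k < m.+3 ->
  \sum_(s <- V m.+2) bad m k s =
  \sum_(s <- V m.+1) ((nth 0 s m <= nth 0 s m.-1) * (k.-1 - nth 0 s m)).
Proof.
move=> hk; rewrite sumV; apply: eq_big_seq => s hs.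
have sz := V_size hs.
under eq_bigr => x _ do rewrite /bad !nth_rcons sz ltnSn ltnn eqxx.
rewrite /ok.
case: (leqP (nth 0 s m) (nth 0 s m.-1)) => h /=.
  by rewrite mul1n cnt; lia.
rewrite mul0n big1 // => x /negbTE hx.
by rewrite hx.
Qed.

Lemma HS3 m k : 0 < m ->
  \sum_(s <- V m.+1) ((nth 0 s m <= nth 0 s m.-1) * (k.-1 - nth 0 s m)) =
  \sum_(s <- V m) c k (nth 0 s m.-1).
Proof.
move=> hm; rewrite sumV; apply: eq_big_seq => s hs.
have sz := V_size hs.
have hm1 : m.-1 < m by lia.
have ht : nth 0 s m.-1 <= m.-1 by apply: V_nth hs hm1.
set t := nth 0 s m.-1 in ht *.
under eq_bigr => x _ do rewrite !nth_rcons sz ltnn eqxx hm1 -/t.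
rewrite big_mkcond /=.
rewrite (eq_bigr (fun x => (x <= t) * (k.-1 - x))); last first.
  move=> x _; case hxt: (x <= t); last by case: (ok _ _ _).
  by rewrite /ok -/t (ltnNge t x) hxt andbF.
rewrite (@big_cat_nat _ _ _ t.+1) //=; last by lia.
rewrite [X in _ + X = _]big1_seq ?addn0; last first.
  move=> x /andP[_]; rewrite mem_index_iota => /andP[h1 _].
  by rewrite leqNgt h1.
by apply: eq_big_nat => x /andP[_ h]; rewrite -ltnS h mul1n.
Qed.

Lemma HS4 m k : 0 < m ->
  \sum_(s <- V m) c k (nth 0 s m.-1) = \sum_(0 <= i < m) c k i * A m i.
Proof.
move=> hm.
under [RHS]eq_bigr => i _ do rewrite /A count_sum big_distrr.
rewrite exchange_big; apply: eq_big_seq => s hs /=.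
have hm1 : m.-1 < m by lia.
have ht : nth 0 s m.-1 <= m.-1 by apply: V_nth hs hm1.
rewrite (bigD1_seq (nth 0 s m.-1)) ?mem_index_iota ?iota_uniq //=; last by lia.
rewrite hm eqxx muln1 big1 ?addn0 // => i /negbTE hi.
by rewrite eq_sym hi muln0.
Qed.

Lemma S5a j m (a : nat -> nat) :
  \sum_(j <= i < m) a i = \sum_(0 <= i < m) (j <= i) * a i.
Proof.
case: (leqP j m) => hj.
  rewrite [RHS](@big_cat_nat _ _ _ j) //= [X in _ = X + _]big1_seq ?add0n; last first.
    move=> i /andP[_]; rewrite mem_index_iota => /andP[_ h].
    by have -> : j <= i = false by lia.
  by apply: eq_big_nat => i /andP[h _]; rewrite h mul1n.
rewrite big_geq; last by lia.
rewrite big1_seq // => i /andP[_]; rewrite mem_index_iota => /andP[_ h].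
by have -> : j <= i = false by lia.
Qed.

Lemma m1 N i : \sum_(0 <= j < N) (j <= i) = minn N i.+1.
Proof.
elim: N => [|N IH]; first by rewrite big_geq // min0n.
rewrite big_nat_recr //= IH; case: (leqP N i) => h /=; lia.
Qed.

Lemma m2 N k : \sum_(0 <= y < N) (y < k) = minn N k.
Proof.
elim: N => [|N IH]; first by rewrite big_geq // min0n.
rewrite big_nat_recr //= IH; case: (ltnP N k) => h /=; lia.
Qed.

Lemma hc k i : \sum_(1 <= l < k) \sum_(0 <= j < l) (j <= i) = c k i.
Proof.
elim: k => [|k IH].
  rewrite big_geq // /c big1_seq // => y _; by [].
case: k IH => [|k] IH.
  rewrite big_geq // /c big1_seq // => y _; by [].
rewrite big_nat_recr //= IH /c m1.
have -> : \sum_(0 <= y < i.+1) (k.+2.-1 - y) =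
          \sum_(0 <= y < i.+1) ((k.+1.-1 - y) + (y < k.+1)).
  by apply: eq_bigr => y _; case: (ltnP y k.+1) => h /=; lia.
by rewrite big_split /= m2 minnC.
Qed.

Lemma HS5 k m (a : nat -> nat) :
  \sum_(1 <= l < k) \sum_(0 <= j < l) \sum_(j <= i < m) a i =
  \sum_(0 <= i < m) c k i * a i.
Proof.
under eq_bigr => l _ do under eq_bigr => j _ do rewrite S5a.
under eq_bigr => l _ do rewrite exchange_big.
rewrite exchange_big; apply: eq_bigr => i _.
rewrite -hc big_distrl /=; apply: eq_bigr => l _.
by rewrite big_distrl.
Qed.

Lemma mainNat m k : 0 < m -> k < m.+3 ->
  A m.+3 k + \sum_(1 <= l < k) \sum_(0 <= j < l) \sum_(j <= i < m) A m i = size (V m.+2).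
Proof. by move=> hm hk; rewrite HS5 -HS4 // -HS3 // -HS2 // HS1. Qed.

Lemma cardk n k : #|I012k n k| = A n k.
Proof.
rewrite /A -bridge; apply: eq_card => t; rewrite !inE.
by rewrite andbA.
Qed.

Lemma cardT n : #|I012 n| = size (V n).
Proof.
rewrite -count_predT -bridge; apply: eq_card => t; rewrite !inE.
by rewrite andbT.
Qed.

Lemma L1 k i : i < k -> 2 * c k i = i.+1 * (2 * k - 2 - i).
Proof.
elim: i => [|i IH] h.
  rewrite /c big_nat1; lia.
rewrite /c big_nat_recr //= -/(c k i) mulnDr IH; last by lia.
have [d ->] : exists d, k = i.+2 + d by exists (k - i.+2); lia.
have -> : 2 * (i.+2 + d) - 2 - i = i.+2 + 2 * d by lia.
have -> : (i.+2 + d).-1 - i.+1 = d by lia.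
have -> : 2 * (i.+2 + d) - 2 - i.+1 = i.+1 + 2 * d by lia.
nia.
Qed.

Lemma L2 k i : k <= i.+2 -> 2 * c k i = k * (k - 1).
Proof.
elim: i => [|i IH] h.
  case: (ltnP k 2) => hk.
    rewrite /c big_nat1; case: k h hk => [|[|]] //.
  have -> : k = 2 by lia.
  by rewrite /c big_nat1.
case: (leqP k i.+2) => hk.
  rewrite /c big_nat_recr //= -/(c k i) mulnDr IH //; lia.
have -> : k = i.+3 by lia.
rewrite L1 //.
have -> : 2 * i.+3 - 2 - i.+1 = i.+3 by lia.
have -> : i.+3 - 1 = i.+2 by lia.
nia.
Qed.
Local Open Scope ring_scope.

Lemma two_nz : (2 : rat) != 0. Proof. by []. Qed.

Lemma closedR k m (a : nat -> nat) : (k - 2 <= m)%N ->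
  \sum_(0 <= i < k - 2) (i.+1)%:R * (k%:R - 1 - i%:R / 2) * (a i)%:R
  + (k * (k - 1))%:R / 2 * \sum_(k - 2 <= i < m) (a i)%:R
  = ((\sum_(0 <= i < m) c k i * a i)%:R : rat).
Proof.
move=> h; rewrite natr_sum [RHS](@big_cat_nat _ _ _ (k - 2)) //=.
congr (_ + _).
  apply: eq_big_nat => i /andP[_ hi]; rewrite natrM; congr (_ * _).
  have hik : (i < k)%N by lia.
  have H1 : 2 * (c k i)%:R = (i.+1)%:R * (2 * k - 2 - i)%:R :> rat.
    by have := congr1 (fun n : nat => n%:R : rat) (L1 hik); rewrite /= !natrM; move=> <-.
  have H2 : (2 * k - 2 - i)%:R + i%:R + 2 = 2 * k%:R :> rat.
    have e : (2 * k - 2 - i + i + 2 = 2 * k)%N by lia.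
    have := congr1 (fun n : nat => n%:R : rat) e; rewrite !natrD; lra.
  have HX : (2 * k - 2 - i)%:R = 2 * k%:R - 2 - i%:R :> rat by lra.
  rewrite HX in H1.
  by apply: (mulfI two_nz); rewrite H1; field.
rewrite mulr_sumr /=; apply: eq_big_nat => i /andP[hi _]; rewrite [RHS]natrM; congr (_ * _).
have hik : (k <= i.+2)%N by lia.
apply: (mulfI two_nz).
have := congr1 (fun n : nat => n%:R : rat) (L2 hik); rewrite /= !natrM => ->.
by field.
Qed.

Theorem mainTheorem14 :
  (* the recurrence, n >= 4, 0 <= k < n *)
  (forall n k : nat, (4 <= n)%N -> (k < n)%N ->
     (#|I012k n k|%:R : rat) =
       (#|I012 n.-1|)%:R
       - \sum_(1 <= l < k) \sum_(0 <= j < l) \sum_(j <= i < n - 3)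
            (#|I012k (n - 3) i|)%:R)
  (* initial conditions *)
  /\ (#|I012k 1 0| = 1 /\ #|I012k 2 0| = 1 /\ #|I012k 2 1| = 1
      /\ #|I012k 3 2| = 1 /\ #|I012k 3 0| = 2 /\ #|I012k 3 1| = 2)%N
  (* the equivalent closed form *)
  /\ (forall n k : nat, (4 <= n)%N -> (k < n)%N ->
     (#|I012k n k|%:R : rat) =
       (#|I012 n.-1|)%:R
       - \sum_(0 <= i < k - 2) (i.+1)%:R * (k%:R - 1 - i%:R / 2)
            * (#|I012k (n - 3) i|)%:R
       - (k * (k - 1))%:R / 2 * \sum_(k - 2 <= i < n - 3) (#|I012k (n - 3) i|)%:R).
Proof.
split; [|split].
- move=> n k; case: n => [|[|[|m]]] // h4 hk.
  have hm : (0 < m)%N by lia.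
  have -> : (m.+3 - 3 = m)%N by lia.
  rewrite cardk cardT.
  rewrite (_ : \sum_(1 <= l < k) \sum_(0 <= j < l) \sum_(j <= i < m) (#|I012k m i|)%:R
     = ((\sum_(1 <= l < k) \sum_(0 <= j < l) \sum_(j <= i < m) A m i)%:R : rat)); last first.
    rewrite natr_sum; apply: eq_bigr => l _; rewrite natr_sum; apply: eq_bigr => j _.
    by rewrite natr_sum; apply: eq_bigr => i _; rewrite cardk.
  by rewrite -(mainNat hm hk) natrD addrK.
- by repeat split; rewrite cardk; vm_compute.
- move=> n k; case: n => [|[|[|m]]] // h4 hk.
  have hm : (0 < m)%N by lia.
  have -> : (m.+3 - 3 = m)%N by lia.
  rewrite cardk cardT.
  have cA : forall i, (#|I012k m i|%:R : rat) = (A m i)%:R by move=> i; rewrite cardk.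
  under eq_bigr => i _ do rewrite cA.
  under [\sum_(k - 2 <= i < m) _]eq_bigr => i _ do rewrite cA.
  rewrite -addrA -opprD closedR; last by lia.
  by rewrite -(HS5 k m (A m)) -(mainNat hm hk) natrD addrK.
Qed.
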